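(* Let $P : E \to B$ be a functor between finite categories which is both fibered in groupoids and cofibered in groupoids, and suppose $B$ is connected. Let $F = P^{-1}(b)$ be the fiber category over an object $b$ of $B$ (all fibers are equivalent, so the choice of $b$ does not matter). If $E$ and $B$ have Euler characteristics, then $F$ has Euler characteristic and \[ \chi(E) = \chi(B)\,\chi(F). \]
   Context: Matrices and Euler characteristic: for finite sets $I,J$ and $\zeta : I\times J \to \mathbb{Q}$, a weighting is $k^{\bullet} : J \to \mathbb{Q}$ with $\sum_j \zeta(i,j)k^j = 1$ for all $i$; a coweighting is $k_{\bullet} : I\to\mathbb{Q}$ with $\sum_i k_i\zeta(i,j)=1$ for all $j$. $\zeta$ has Euler characteristic if it has both, and then $|\zeta| = \sum_j k^j = \sum_i k_i$ (independent of choices). A finite category $A$ (finitely many objects and morphisms) has similarity matrix $\zeta_A(x,y) = \#A(x,y)$ on $\mathrm{ob}(A)\times \mathrm{ob}(A)$; $A$ has Euler characteristic if $\zeta_A$ does, and $\chi(A) = |\zeta_A|$. A morphism $f : e \to e'$ in $E$ is cartesian (for $P$) if for every $g : e'' \to e'$ in $E$ and every $h : P(e'') \to P(e)$ in $B$ with $P(f)\circ h = P(g)$ there is a unique $\tilde h : e'' \to e$ with $P(\tilde h) = h$ and $f \circ \tilde h = g$. $P$ is fibered in groupoids if every morphism of $E$ is cartesian and every morphism $f : b \to P(e)$ in $B$ has a lift $\tilde f : e' \to e$ in $E$ with $P(\tilde f) = f$. Cofibered in groupoids is the dual notion (reverse all morphisms). The fiber category $P^{-1}(b)$ is the subcategory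 of $E$ with objects $e$ with $P(e) = b$ and morphisms $f$ with $P(f) = \mathrm{id}_b$. A category is connected if any two objects are joined by a finite zigzag of morphisms. *)

(* Defs.v *)
From HB Require Import structures.
From mathcomp Require Import all_boot all_order all_algebra.
From Stdlib Require Import ClassicalEpsilon.
Set Implicit Arguments. Unset Strict Implicit. Unset Printing Implicit Defensive.
Import GRing.Theory Num.Theory.
Local Open Scope ring_scope.

Definition is_weighting (I J : finType) (zeta : I -> J -> rat) (k : J -> rat) :=
  forall i : I, \sum_(j : J) zeta i j * k j = 1.

Definition is_coweighting (I J : finType) (zeta : I -> J -> rat) (k : I -> rat) :=
  forall j : J, \sum_(i : I) k i * zeta i j = 1.

Definition has_euler (I J : finType) (zeta : I -> J -> rat) :=
  (exists k, is_weighting zeta k) /\ (exists k, is_coweighting zeta k).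

(* |zeta| := sum_j k^j for a (chosen) weighting k^.; meaningful when
   zeta has Euler characteristic (then independent of the choice). *)
Definition euler (I J : finType) (zeta : I -> J -> rat) : rat :=
  epsilon (inhabits 0)
    (fun x => exists k, is_weighting zeta k /\ \sum_(j : J) k j = x).

Record fcat := FCat {
  ob : finType;
  hom : ob -> ob -> finType;
  idm : forall x, hom x x;
  comp : forall x y z, hom y z -> hom x y -> hom x z;
  comp_id_l : forall x y (f : hom x y), comp (idm y) f = f;
  comp_id_r : forall x y (f : hom x y), comp f (idm x) = f;
  comp_assoc : forall x y z w (h : hom z w) (g : hom y z) (f : hom x y),
      comp h (comp g f) = comp (comp h g) f
}.
Arguments idm {f} x : rename.
Arguments comp {f x y z} _ _ : rename.

Definition zeta (A : fcat) (x y : ob A) : rat := (#|hom x y|)%:R.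

Definition fcat_has_euler (A : fcat) := has_euler (@zeta A).
Definition chi (A : fcat) : rat := euler (@zeta A).

(* morphisms of a category viewed with their endpoints, to compare
   morphisms whose endpoints are only propositionally equal *)
Definition tmor (A : fcat) (x y : ob A) (f : hom x y) :
  {p : ob A * ob A & hom p.1 p.2} :=
  Tagged (fun p : ob A * ob A => hom p.1 p.2) (f : hom (x, y).1 (x, y).2).

Definition fcat_connected (A : fcat) :=
  forall x y : ob A,
    connect (fun a b : ob A => (0 < #|hom a b|)%N || (0 < #|hom b a|)%N) x y.

Record functor (C D : fcat) := Functor {
  fob : ob C -> ob D;
  fmor : forall x y, hom x y -> hom (fob x) (fob y);
  fmor_id : forall x, fmor (idm x) = idm (fob x);
  fmor_comp : forall x y z (g : hom y z) (f : hom x y),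
      fmor (comp g f) = comp (fmor g) (fmor f)
}.
Arguments fob {C D} _ _.
Arguments fmor {C D} _ {x y} _.

Section Fib.
Variables (E B : fcat) (P : functor E B).

Definition cartesian (e e' : ob E) (f : hom e e') :=
  forall (e'' : ob E) (g : hom e'' e') (h : hom (fob P e'') (fob P e)),
    comp (fmor P f) h = fmor P g ->
    exists! ht : hom e'' e, fmor P ht = h /\ comp f ht = g.

Definition cocartesian (e e' : ob E) (f : hom e e') :=
  forall (e'' : ob E) (g : hom e e'') (h : hom (fob P e') (fob P e'')),
    comp h (fmor P f) = fmor P g ->
    exists! ht : hom e' e'', fmor P ht = h /\ comp ht f = g.

Definition fibered_in_groupoids :=
  (forall (e e' : ob E) (f : hom e e'), cartesian f) /\
  (forall (e : ob E) (b : ob B) (f : hom b (fob P e)),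
     exists (e' : ob E) (ft : hom e' e), tmor (fmor P ft) = tmor f).

Definition cofibered_in_groupoids :=
  (forall (e e' : ob E) (f : hom e e'), cocartesian f) /\
  (forall (e : ob E) (b : ob B) (f : hom (fob P e) b),
     exists (e' : ob E) (ft : hom e e'), tmor (fmor P ft) = tmor f).

(* The fiber category P^{-1}(b): objects e with P e = b, morphisms f with
   P f = id_b.  We only need its similarity matrix. *)
Definition fiber_ob (b : ob B) := {e : ob E | fob P e == b}.

Definition zeta_fiber (b : ob B) (x y : fiber_ob b) : rat :=
  (#|[pred f : hom (val x) (val y) | tmor (fmor P f) == tmor (idm b)]|)%:R.

End Fib.
Arguments zeta_fiber {E B} P b x y.
Arguments fibered_in_groupoids {E B} P.
Arguments cofibered_in_groupoids {E B} P.

(* Main.v *)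
From Pilot Require Import Defs.
From HB Require Import structures.
From mathcomp Require Import all_boot all_order all_algebra.
From Stdlib Require Import Eqdep_dec ClassicalEpsilon.
Import Pilot.Defs.
Import GRing.Theory Num.Theory.
Local Open Scope ring_scope.
Set Implicit Arguments. Unset Strict Implicit. Unset Printing Implicit Defensive.

Lemma tmor_ob (A : fcat) (x y x' y' : ob A) (f : hom x y) (g : hom x' y') :
  tmor f = tmor g -> x = x' /\ y = y'.
Proof. by move=> /(congr1 tag) [-> ->]. Qed.

Lemma tmor_inj (A : fcat) (x y : ob A) (f g : hom x y) : tmor f = tmor g -> f = g.
Proof. move=> H; exact: (inj_pair2_eq_dec _ (@eq_comparable _) (fun p : ob A * ob A => hom p.1 p.2) (x, y) f g H). Qed.

Lemma tmor_comp (A : fcat) (x y z x' z' : ob A) (a : hom y z) (b : hom x y)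
  (a' : hom y z') (b' : hom x' y) :
  tmor a = tmor a' -> tmor b = tmor b' -> tmor (comp a b) = tmor (comp a' b').
Proof.
move=> Ha Hb; case: (tmor_ob Ha) => _ ez; case: (tmor_ob Hb) => ex _.
subst; by rewrite (tmor_inj Ha) (tmor_inj Hb).
Qed.

Lemma tmor_compl (A : fcat) (x y z : ob A) (a : hom y z) (b : hom x y) :
  tmor a = tmor (idm y) -> tmor (comp a b) = tmor b.
Proof. move=> Ha; case: (tmor_ob Ha) => _ ez; subst; by rewrite (tmor_inj Ha) comp_id_l. Qed.

Lemma tmor_compr (A : fcat) (x y z : ob A) (a : hom y z) (b : hom x y) :
  tmor b = tmor (idm y) -> tmor (comp a b) = tmor a.
Proof. move=> Hb; case: (tmor_ob Hb) => ex _; subst; by rewrite (tmor_inj Hb) comp_id_r. Qed.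

Lemma tmor_idm (A : fcat) (x y : ob A) : x = y -> tmor (idm x) = tmor (idm y).
Proof. by move=> ->. Qed.

Lemma ex_idm (A : fcat) (x y : ob A) : x = y -> exists h : hom x y, tmor h = tmor (idm x).
Proof. move=> <-; by exists (idm x). Qed.

Lemma ex_idm2 (A : fcat) (x y : ob A) : x = y ->
  exists h : hom x y, tmor h = tmor (idm x) /\ tmor h = tmor (idm y).
Proof. move=> <-; by exists (idm x). Qed.

Lemma sum_bool (T : finType) (p : T -> bool) :
  \sum_(t : T) ((p t)%:R : rat) = (#|[pred t | p t]|)%:R.
Proof.
rewrite -sum1_card natr_sum [RHS]big_mkcond /=; apply: eq_bigr => t _.
by rewrite inE; case: (p t).
Qed.

Lemma unique_h (A : fcat) (a c : ob A) (g : hom a c) (F : ob A -> rat) :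
  \sum_(b : ob A) \sum_(h : hom a b) (tmor g == tmor h)%:R * F b = F c.
Proof.
rewrite (bigD1 c) //= [X in _ + X]big1 ?addr0.
  rewrite (bigD1 g) //= eqxx mul1r big1 ?addr0 // => h Hh.
  case: eqP => [/tmor_inj e|]; last by rewrite mul0r.
  by rewrite e eqxx in Hh.
move=> b Hb; apply: big1 => h _; case: eqP => [e|]; last by rewrite mul0r.
by case: (tmor_ob e) => _ ecb; rewrite ecb eqxx in Hb.
Qed.

Lemma wc_sum (I J : finType) (z : I -> J -> rat) k c :
  is_weighting z k -> is_coweighting z c -> \sum_j k j = \sum_i c i.
Proof.
move=> Hk Hc.
transitivity (\sum_j (\sum_i c i * z i j) * k j).
  by apply: eq_bigr => j _; rewrite Hc mul1r.
under eq_bigr do rewrite mulr_suml.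
rewrite exchange_big; apply: eq_bigr => i _.
rewrite -[RHS]mulr1 -(Hk i) mulr_sumr; apply: eq_bigr => j _; by rewrite mulrA.
Qed.

Lemma euler_w (I J : finType) (z : I -> J -> rat) k :
  is_weighting z k -> (exists c, is_coweighting z c) -> euler z = \sum_j k j.
Proof.
move=> Hk [c Hc]; rewrite /euler.
have Hex : exists x, exists k0, is_weighting z k0 /\ \sum_j k0 j = x.
  by exists (\sum_j k j); exists k.
case: (epsilon_spec (inhabits 0) _ Hex) => k' [Hk' <-].
by rewrite (wc_sum Hk' Hc) (wc_sum Hk Hc).
Qed.

Section Main.
Variables (E B : fcat) (P : functor E B).
Hypothesis cocart : forall (e e' : ob E) (f : hom e e'), cocartesian P f.
Hypothesis colift : forall (e : ob E) (b : ob B) (f : hom (fob P e) b),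
     exists (e' : ob E) (ft : hom e e'), tmor (fmor P ft) = tmor f.
Hypothesis lift : forall (e : ob E) (b : ob B) (f : hom b (fob P e)),
     exists (e' : ob E) (ft : hom e' e), tmor (fmor P ft) = tmor f.
Hypothesis cart : forall (e e' : ob E) (f : hom e e'), cartesian P f.

Definition fib (x y : ob E) := [pred g : hom x y | tmor (fmor P g) == tmor (idm (fob P x))].
Definition nfib x y := #|fib x y|.
Definition dd (x : ob E) := (\sum_(y : ob E) nfib x y)%N.
Definition din (y : ob E) := (\sum_(x : ob E) nfib x y)%N.

Lemma fibP x y (g : hom x y) : g \in fib x y ->
  [/\ fob P y = fob P x, tmor (fmor P g) = tmor (idm (fob P x)) &
      tmor (fmor P g) = tmor (idm (fob P y))].
Proof.
rewrite inE => /eqP H; case: (tmor_ob H) => _ ey; split => //.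
by rewrite H ey.
Qed.

Lemma fib_id x : idm x \in fib x x.
Proof. by rewrite inE fmor_id. Qed.

Lemma dd_gt0 x : (0 < dd x)%N.
Proof.
rewrite /dd (bigD1 x) //= /nfib; apply: leq_trans (leq_addr _ _).
by apply/card_gt0P; exists (idm x); exact: fib_id.
Qed.

Lemma din_gt0 x : (0 < din x)%N.
Proof.
rewrite /din (bigD1 x) //= /nfib; apply: leq_trans (leq_addr _ _).
by apply/card_gt0P; exists (idm x); exact: fib_id.
Qed.

Lemma bij_co e e0 (f0 : hom e e0) z :
  #|[pred f : hom e z | tmor (fmor P f) == tmor (fmor P f0)]| = nfib e0 z.
Proof.
rewrite /nfib -(card_in_imset (f := fun k => comp k f0)).
  apply: eq_card => f; rewrite !inE; apply/eqP/imsetP.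
  - move=> Hf; case: (tmor_ob Hf) => _ ez.
    case: (ex_idm2 (esym ez)) => h'' [H1 H2].
    have Hc : comp h'' (fmor P f0) = fmor P f.
      by apply: tmor_inj; rewrite (tmor_compl _ H1) Hf.
    case: (cocart Hc) => ht [[Hht1 Hht2] _].
    exists ht => //; by rewrite inE Hht1 H1.
  - case=> k Hk ->; rewrite fmor_comp; apply: tmor_compl.
    by case: (fibP Hk).
move=> k1 k2 Hk1 Hk2 /= Heq.
have Hc : comp (fmor P k1) (fmor P f0) = fmor P (comp k1 f0) by rewrite fmor_comp.
case: (cocart Hc) => ht [_ Hu].
have e1 := Hu k1 (conj erefl erefl).
have Hpk : fmor P k2 = fmor P k1.
  apply: tmor_inj; by case: (fibP Hk1) => _ -> _; case: (fibP Hk2) => _ -> _.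
have e2 := Hu k2 (conj Hpk (esym Heq)).
by rewrite -e1 -e2.
Qed.

Lemma bij_ca e1 e'' (f1 : hom e1 e'') z :
  #|[pred f : hom z e'' | tmor (fmor P f) == tmor (fmor P f1)]| = nfib z e1.
Proof.
rewrite /nfib -(card_in_imset (f := fun k => comp f1 k)).
  apply: eq_card => f; rewrite !inE; apply/eqP/imsetP.
  - move=> Hf; case: (tmor_ob Hf) => ez _.
    case: (ex_idm2 ez) => h'' [H1 H2].
    have Hc : comp (fmor P f1) h'' = fmor P f.
      by apply: tmor_inj; rewrite (tmor_compr _ H2) Hf.
    case: (cart Hc) => ht [[Hht1 Hht2] _].
    exists ht => //; by rewrite inE Hht1 H1.
  - case=> k Hk ->; rewrite fmor_comp; apply: tmor_compr.
    by case: (fibP Hk).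
move=> k1 k2 Hk1 Hk2 /= Heq.
have Hc : comp (fmor P f1) (fmor P k1) = fmor P (comp f1 k1) by rewrite fmor_comp.
case: (cart Hc) => ht [_ Hu].
have e1' := Hu k1 (conj erefl erefl).
have Hpk : fmor P k2 = fmor P k1.
  apply: tmor_inj; by case: (fibP Hk1) => _ -> _; case: (fibP Hk2) => _ -> _.
have e2 := Hu k2 (conj Hpk (esym Heq)).
by rewrite -e1' -e2.
Qed.

Lemma dd_inv x y (g : hom x y) : g \in fib x y -> dd x = dd y.
Proof.
move=> Hg; apply: eq_bigr => z _; rewrite -(bij_co g z).
apply: eq_card => f; rewrite !inE; by case: (fibP Hg) => _ -> _.
Qed.

Lemma nfib0 x y : fob P y != fob P x -> nfib x y = 0%N.
Proof.
move=> H; apply: eq_card0 => f; rewrite !inE; apply/negP => Hf.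
by case: (fibP (g := f) Hf) => e _ _; rewrite e eqxx in H.
Qed.

Lemma din_inv x y (g : hom x y) : g \in fib x y -> din x = din y.
Proof.
move=> Hg; apply: eq_bigr => z _; case: (fibP Hg) => eyx Hg1 Hg2.
have [ezx|nzx] := eqVneq (fob P x) (fob P z).
  rewrite -(bij_ca g z); apply: eq_card => f; rewrite !inE Hg1.
  by rewrite (tmor_idm ezx).
by rewrite !nfib0 // eyx.
Qed.

Lemma S1 x : \sum_(e : ob E) (nfib x e)%:R / (dd e)%:R = 1 :> rat.
Proof.
have H : forall e, (nfib x e)%:R / (dd e)%:R = (nfib x e)%:R / (dd x)%:R :> rat.
  move=> e; case: (posnP (nfib x e)) => [->|]; first by rewrite !mul0r.
  by move/card_gt0P => [g Hg]; rewrite (dd_inv Hg).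
rewrite (eq_bigr _ (fun e _ => H e)) -mulr_suml -natr_sum divff //.
by rewrite pnatr_eq0 -lt0n dd_gt0.
Qed.

Lemma S1' y : \sum_(e : ob E) (nfib e y)%:R / (din e)%:R = 1 :> rat.
Proof.
have H : forall e, (nfib e y)%:R / (din e)%:R = (nfib e y)%:R / (din y)%:R :> rat.
  move=> e; case: (posnP (nfib e y)) => [->|]; first by rewrite !mul0r.
  by move/card_gt0P => [g Hg]; rewrite (din_inv Hg).
rewrite (eq_bigr _ (fun e _ => H e)) -mulr_suml -natr_sum divff //.
by rewrite pnatr_eq0 -lt0n din_gt0.
Qed.

Lemma L1 e a b' (h : hom a b') : fob P e = a ->
  \sum_(e' : ob E) \sum_(f : hom e e') ((tmor (fmor P f) == tmor h)%:R / (dd e')%:R) = 1 :> rat.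
Proof.
move=> ea; subst a; case: (colift h) => e0 [f0 Hf0].
rewrite -[RHS](S1 e0); apply: eq_bigr => e' _; rewrite -mulr_suml sum_bool.
by rewrite -Hf0 -(bij_co f0 e').
Qed.

Lemma L1' e a b (h : hom a b) : fob P e = b ->
  \sum_(e' : ob E) \sum_(f : hom e' e) ((tmor (fmor P f) == tmor h)%:R / (din e')%:R) = 1 :> rat.
Proof.
move=> eb; subst b; case: (lift h) => e1 [f1 Hf1].
rewrite -[RHS](S1' e1); apply: eq_bigr => e' _; rewrite -mulr_suml sum_bool.
by rewrite -Hf1 -(bij_ca f1 e').
Qed.

Lemma wE (w : ob B -> rat) : is_weighting (@zeta B) w ->
  is_weighting (@zeta E) (fun e => w (fob P e) / (dd e)%:R).
Proof.
move=> Hw e; rewrite /zeta.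
transitivity (\sum_(e' : ob E) \sum_(f : hom e e') \sum_(b' : ob B)
   \sum_(h : hom (fob P e) b') (tmor (fmor P f) == tmor h)%:R * (w b' / (dd e')%:R)).
  apply: eq_bigr => e' _; rewrite mulr_natl -sumr_const; apply: eq_bigr => f _.
  by rewrite (unique_h (fmor P f) (fun b' => w b' / (dd e')%:R)).
under eq_bigr => e' _ do rewrite exchange_big.
under eq_bigr => e' _ do under eq_bigr => b' _ do rewrite exchange_big.
rewrite exchange_big.
under eq_bigr => b' _ do rewrite exchange_big.
rewrite -[RHS](Hw (fob P e)); apply: eq_bigr => b' _.
under eq_bigr => h _ do under eq_bigr => e' _ do under eq_bigr => f _ do rewrite mulrCA.
under eq_bigr => h _ do under eq_bigr => e' _ do rewrite -mulr_sumr.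
under eq_bigr => h _ do rewrite -mulr_sumr (L1 h erefl) mulr1.
by rewrite sumr_const mulr_natl.
Qed.

Definition cc b := \sum_(e | fob P e == b) ((dd e)%:R)^-1 : rat.
Definition cin b := \sum_(e | fob P e == b) ((din e)%:R)^-1 : rat.

Lemma L2 b1 b2 (h : hom b1 b2) : cin b1 = cc b2.
Proof.
pose S := \sum_(e' : ob E) \sum_(e'' : ob E) \sum_(f : hom e' e'')
   (tmor (fmor P f) == tmor h)%:R * (((din e')%:R)^-1 * ((dd e'')%:R)^-1) : rat.
transitivity S.
  rewrite /S /cin big_mkcond; apply: eq_bigr => e' _.
  case: eqP => [He|Hne].
    under eq_bigr => e'' _ do under eq_bigr => f _ do rewrite mulrCA.
    under eq_bigr => e'' _ do rewrite -mulr_sumr.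
    by rewrite -mulr_sumr (L1 h He) mulr1.
  symmetry; apply: big1 => e'' _; apply: big1 => f _; case: eqP => [e|]; last by rewrite mul0r.
  by case: (tmor_ob e) => ex _; case: Hne.
rewrite /S /cc exchange_big [RHS]big_mkcond; apply: eq_bigr => e'' _.
case: eqP => [He|Hne].
  under eq_bigr => e' _ do under eq_bigr => f _ do rewrite mulrA.
  under eq_bigr => e' _ do rewrite -mulr_suml.
  by rewrite -mulr_suml (L1' h He) mul1r.
apply: big1 => e' _; apply: big1 => f _; case: eqP => [e|]; last by rewrite mul0r.
by case: (tmor_ob e) => _ ey; case: Hne.
Qed.

Lemma zfE b (x y : fiber_ob P b) : zeta_fiber P b x y = (nfib (val x) (val y))%:R.
Proof.
rewrite /zeta_fiber /nfib; congr (_%:R); apply: eq_card => f; rewrite !inE.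
by rewrite (tmor_idm (eqP (valP x))).
Qed.

Lemma sum_fiber b (F : ob E -> rat) :
  \sum_(y : fiber_ob P b) F (val y) = \sum_(e | fob P e == b) F e.
Proof. exact: (esym (big_sub [pred e | fob P e == b] F)). Qed.

Lemma wF b : is_weighting (zeta_fiber P b) (fun y => ((dd (val y))%:R)^-1).
Proof.
move=> x; under eq_bigr => y _ do rewrite zfE.
rewrite (@sum_fiber b (fun e => (nfib (val x) e)%:R * ((dd e)%:R)^-1)).
rewrite -[RHS](S1 (val x)) [RHS](bigID (fun e => fob P e == b)) /= [X in _ + X]big1 ?addr0 //.
move=> e He; rewrite nfib0 ?mul0r //; by rewrite (eqP (valP x)).
Qed.

Lemma cF b : is_coweighting (zeta_fiber P b) (fun y => ((din (val y))%:R)^-1).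
Proof.
move=> y; under eq_bigr => x _ do rewrite zfE mulrC.
rewrite (@sum_fiber b (fun e => (nfib e (val y))%:R * ((din e)%:R)^-1)).
rewrite -[RHS](S1' (val y)) [RHS](bigID (fun e => fob P e == b)) /= [X in _ + X]big1 ?addr0 //.
move=> e He; rewrite nfib0 ?mul0r //; by rewrite (eqP (valP y)) eq_sym.
Qed.

Lemma cc_cin b : cc b = cin b.
Proof.
rewrite /cc /cin -(@sum_fiber b (fun e => ((dd e)%:R)^-1)).
by rewrite -(@sum_fiber b (fun e => ((din e)%:R)^-1)) (wc_sum (@wF b) (@cF b)).
Qed.

Lemma cc_step b1 b2 (h : hom b1 b2) : cc b1 = cc b2.
Proof. by rewrite cc_cin (L2 h). Qed.

Lemma cc_conn : fcat_connected B -> forall x y, cc x = cc y.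
Proof.
move=> conn x y; move/connectP: (conn x y) => [p Hp ->].
elim: p x Hp => [|z p IH] x //= /andP [Hr Hp]; rewrite -(IH z Hp).
by case/orP: Hr => /card_gt0P [h _]; [exact: cc_step h | exact: esym (cc_step h)].
Qed.

Lemma main_sec b : fcat_connected B -> fcat_has_euler E -> fcat_has_euler B ->
  has_euler (zeta_fiber P b) /\ chi E = chi B * euler (zeta_fiber P b).
Proof.
move=> conn [[kE HkE] HcE] [[w Hw] HcB].
split; first by split; [exists (fun y : fiber_ob P b => ((dd (val y))%:R)^-1); exact: wF
                        | exists (fun y : fiber_ob P b => ((din (val y))%:R)^-1); exact: cF].
rewrite /chi (euler_w (wE Hw) HcE) (euler_w Hw HcB).
rewrite (euler_w (@wF b) (ex_intro _ _ (@cF b))).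
rewrite (@sum_fiber b (fun e => ((dd e)%:R)^-1)) -/(cc b) mulr_suml.
rewrite (partition_big (fob P) predT) //=; apply: eq_bigr => b' _.
rewrite (cc_conn conn b b') /cc mulr_sumr; apply: eq_big => e //= /eqP ->.
by [].
Qed.

End Main.

Theorem theorem2p9 (E B : fcat) (P : functor E B) (b : ob B) :
  fibered_in_groupoids P -> cofibered_in_groupoids P ->
  fcat_connected B ->
  fcat_has_euler E -> fcat_has_euler B ->
  has_euler (zeta_fiber P b) /\
  chi E = chi B * euler (zeta_fiber P b).
Proof.
move=> [cart lift] [cocart colift] conn HE HB.
exact: (main_sec cocart colift lift cart b conn HE HB).
Qed.
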